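(* Let $r\in(0,1)$ and $k\geq1$ an integer. Let $W$ be a positive random variable (cascade multiplier) with $\log W=a+bN$, $N\sim\mathrm{Poisson}(\lambda)$, where $a\in\mathbb{R}$, $b<0$, $\lambda>0$. Define the scaling exponents $\zeta_p$ by $\mathbb{E}[W^p]=r^{\zeta_p}$ and $\delta_p=\zeta_{p+k}-\zeta_p$. Then, with $\beta=e^{bk}\in(0,1)$, the limit $\delta_\infty=\lim_{p\to\infty}\delta_p$ exists and is finite and $$\delta_{p+k}=(1-\beta)\delta_\infty+\beta\delta_p\qquad\text{for all }p\in k\mathbb{N}_0=\{0,k,2k,\dots\},$$ i.e.\ the hierarchical symmetry axiom A1 holds. *)

(* Defs.v *)
From HB Require Import structures.
From mathcomp Require Import all_boot all_order all_algebra.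
From mathcomp Require Import all_classical all_reals all_analysis.
Set Implicit Arguments. Unset Strict Implicit. Unset Printing Implicit Defensive.
Import Order.TTheory GRing.Theory Num.Theory.

(* Main.v *)
Require Import Defs.
From HB Require Import structures.
From mathcomp Require Import all_boot all_order all_algebra.
From mathcomp Require Import all_classical all_reals all_analysis.
From mathcomp Require Import ring lra.
Import Order.TTheory GRing.Theory Num.Theory.
Import numFieldNormedType.Exports.
Local Open Scope classical_set_scope.
Local Open Scope ring_scope.

Lemma mgf_poisson d (T : measurableType d) (R : realType)
  (P : probability T R) (lambda c q : R) (N : T -> nat) :
  0 < lambda -> 0 <= c -> 0 <= q ->
  measurable_fun setT N ->
  (forall A : set nat, measurable A ->
     P (N @^-1` A) = poisson_prob lambda 0%N A) ->
  (\int[P]_x (c * q ^+ N x)%:E)%E = (c * expR (- lambda) * expR (lambda * q))%:E.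
Proof.
move=> l0 c0 q0 mN PN.
pose F := fun n : nat => N @^-1` [set n].
have mF k : measurable (F k).
  by rewrite -[F k]setTI; apply: mN.
have UF : \bigcup_k F k = setT.
  by apply/seteqP; split => x // _; exists (N x).
have -> : (\int[P]_x (c * q ^+ N x)%:E)%E =
   (\int[P]_(x in \bigcup_k F k) (c * q ^+ N x)%:E)%E by rewrite UF.
rewrite ge0_integral_bigcup //; last 3 first.
- rewrite UF; apply/measurable_realfun.measurable_EFinP => /=.
  apply: (measurableT_comp (f := fun n : nat => c * q ^+ n)) => //.
- by move=> x _; rewrite lee_fin mulr_ge0 // exprn_ge0.
- by move=> i j _ _ [x [/= <- <-]].
transitivity (\sum_(n <oo) ((c * q ^+ n * poisson_pmf lambda n)%:E))%E.
  apply: eq_eseriesr => n _.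
  rewrite (_ : (\int[P]_(x in F n) (c * q ^+ N x)%:E)%E =
     (\int[P]_(x in F n) (cst (c * q ^+ n)%:E) x)%E); last first.
    by apply: eq_integral => x; rewrite inE /F /= => ->.
  rewrite integral_cst // [in RHS]EFinM; congr (_ * _)%E.
  etransitivity; first exact: PN.
  by rewrite /poisson_prob l0 esum_set1 // lee_fin poisson_pmf_ge0.
under eq_eseriesr => n _.
  rewrite (_ : c * q ^+ n * poisson_pmf lambda n =
     (c * expR (- lambda)) * ((lambda * q) ^+ n * (n`!%:R)^-1)); last first.
    by rewrite /poisson_pmf l0 exprMn; field.
  rewrite EFinM; over.
rewrite /= nneseriesZl /=; last first.
  by move=> n _; rewrite lee_fin mulr_ge0 // ?invr_ge0 // exprn_ge0 // mulr_ge0 // ltW.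
rewrite [in RHS]EFinM; congr (_ * _)%E.
rewrite expRE -EFin_lim; last first.
  rewrite /pseries/=; under eq_fun do rewrite mulrC.
  exact: is_cvg_series_exp_coeff.
apply/congr_lim/funext => n/=; rewrite /pseries/= /series/= -sumEFin//.
by under eq_bigr do rewrite mulrC.
Qed.

Lemma expR_cvg0 (R : realType) (b : R) : b < 0 ->
  expR (b * x) @[x --> +oo] --> 0.
Proof.
move=> b0.
apply/cvgrPdist_le => e e0; near=> x.
rewrite sub0r normrN ger0_norm ?expR_ge0 //.
rewrite -[b*x]opprK expRN -[leRHS]invrK lef_pV2 ?posrE ?expR_gt0 ?invr_gt0//.
rewrite (le_trans _ (expR_ge1Dx _))// -lerBlDl.
near: x.
exists ((e^-1 - 1) / (- b)); split; first exact: num_real.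
move=> y Hy.
have nb : 0 < - b by rewrite oppr_gt0.
rewrite ltr_pdivrMr // in Hy.
by rewrite -mulNr mulrC; exact: ltW.
Unshelve. end_near. Qed.

Theorem mainTheorem6 (d : measure_display) (T : measurableType d) (R : realType)
  (P : probability T R) (r : R) (k : nat) (a b lambda : R)
  (N : T -> nat) (W : T -> R) (zeta : R -> R) :
  0 < r < 1 -> (0 < k)%N -> b < 0 -> 0 < lambda ->
  measurable_fun setT N ->
  (forall A : set nat, measurable A ->
     P (N @^-1` A) = poisson_prob lambda 0%N A) ->
  (forall x, 0 < W x) ->
  (forall x, ln (W x) = a + b * (N x)%:R) ->
  (forall p : R, (\int[P]_x ((W x) `^ p)%:E)%E = (r `^ zeta p)%:E) ->
  let delta := fun p : R => zeta (p + k%:R) - zeta p in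
  let beta := expR (b * k%:R) in
  0 < beta < 1 /\
  exists delta_inf : R,
    delta p @[p --> +oo] --> delta_inf /\
    forall n : nat,
      delta ((n * k)%:R + k%:R) = (1 - beta) * delta_inf + beta * delta (n * k)%:R.
Proof.
move=> /andP[r0 r1] k0 b0 l0 mN PN W0 lnW hint delta beta.
have kpos : 0 < (k%:R : R) by rewrite ltr0n.
have lr : ln r < 0 by apply: ln_lt0; rewrite r0 r1.
have lrn : ln r != 0 by rewrite lt_eqF.
have Hz p : zeta p = (p * a - lambda + lambda * expR (b * p)) / ln r.
  have := hint p.
  rewrite (_ : (\int[P]_x ((W x) `^ p)%:E)%E =
     (\int[P]_x ((expR (p * a)) * (expR (b * p)) ^+ N x)%:E)%E); last first.
    apply: eq_integral => x _.
    by rewrite /powR gt_eqF // lnW -expRM_natl -expRD; congr (expR _)%:E; ring.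
  rewrite (@mgf_poisson _ _ _ P lambda _ _ N) ?expR_ge0 // => -[] /(congr1 (@ln R)).
  rewrite ln_powR -!expRD expRK => ->.
  by field.
have beta01 : 0 < beta < 1.
  rewrite expR_gt0 expR_lt1 /=.
  by rewrite pmulr_llt0.
have Hd p : delta p = k%:R * a / ln r + (lambda * (beta - 1) / ln r) * expR (b * p).
  rewrite /delta !Hz /beta (_ : b * (p + k%:R) = b * p + b * k%:R) ?expRD; last by ring.
  by field.
split => //.
exists (k%:R * a / ln r); split.
  rewrite (_ : delta = fun p => k%:R * a / ln r + (lambda * (beta - 1) / ln r) * expR (b * p)); last first.
    by apply/funext => p; rewrite Hd.
  have H := cvgD (cvg_cst (k%:R * a / ln r)) (cvgM (cvg_cst (lambda * (beta - 1) / ln r)) (@expR_cvg0 R b b0)).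
  rewrite mulr0 addr0 in H; exact: H.
move=> n.
rewrite !Hd (_ : b * ((n * k)%:R + k%:R) = b * (n * k)%:R + b * k%:R) ?expRD; last by ring.
rewrite -/beta.
by ring.
Qed.
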